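(* Let $t_0,t_1$ be terms with $k\notin\mathrm{fv}(t_1)$ such that $(\lambda x.\mathcal Sk.t_0)\,t_1$ and $\mathcal Sk.((\lambda x.t_0)\,t_1)$ are closed. Then $(\lambda x.\mathcal Sk.t_0)\,t_1\approx^p_{\emptyset}\mathcal Sk.((\lambda x.t_0)\,t_1)$.
   Context: Terms of $\lambda_S$: $t ::= x \mid \lambda x.t \mid t\,t \mid \mathcal{S}k.t \mid \langle t\rangle$ (shift binds $k$; $\langle\cdot\rangle$ reset), up to $\alpha$-conversion; $\mathrm{fv}(t)$ free variables. Values $v::=\lambda x.t$. Pure contexts $E ::= \Box \mid v\,E \mid E\,t$; evaluation contexts $F ::= \Box \mid v\,F \mid F\,t \mid \langle F\rangle$. Reduction: $F[(\lambda x.t)v]\to F[t\{v/x\}]$; $F[\langle E[\mathcal Sk.t]\rangle]\to F[\langle t\{\lambda x.\langle E[x]\rangle/k\}\rangle]$ ($x\notin\mathrm{fv}(E)$); $F[\langle v\rangle]\to F[v]$; $\to^*$ reflexive-transitive closure. Program: term $\langle t\rangle$ (ranged over by $p$). Closures: for $R$ a relation on closed terms, $\widetilde R$ is the smallest relation containing $R$, all $(x,x)$, closed under all term constructors, restricted to closed terms; $\widehat R$ is the smallest relation on closed evaluation contexts with $\Box\widehat R\Box$, $v_0F_0\widehat Rv_1F_1$ if $F_0\widehat RF_1,v_0\widetilde Rv_1$; $F_0t_0\widehat RF_1t_1$ if $F_0\widehat RF_1,t_0\widetilde Rt_1$; $\langle F_0\rangle\widehat R\langle F_1\rangle$ if $F_0\widehat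 RF_1$. Environmental bisimilarity for programs: an environment $\mathcal E$ is a relation on closed values; an environmental relation $\mathcal X$ is a set of environments and triples $(\mathcal E,t_0,t_1)$, $t_0,t_1$ closed, written $t_0\mathcal X_{\mathcal E}t_1$. $\mathcal X$ is an environmental bisimulation for programs if (1) if $t_0\mathcal X_{\mathcal E}t_1$ and $t_0,t_1$ are not both programs, then for all pure $E_0\widehat{\mathcal E}E_1$, $\langle E_0[t_0]\rangle\mathcal X_{\mathcal E}\langle E_1[t_1]\rangle$; (2) if $p_0\mathcal X_{\mathcal E}p_1$: (a) $p_0\to p_0'$ (program) implies $p_1\to^*p_1'$ (program) with $p_0'\mathcal X_{\mathcal E}p_1'$; (b) $p_0\to v_0$ implies $p_1\to^*v_1$ and $\{(v_0,v_1)\}\cup\mathcal E\in\mathcal X$; (c) symmetric conditions; (3) for $\mathcal E\in\mathcal X$, $(\lambda x.t_0)\mathcal E(\lambda x.t_1)$ and $v_0\widetilde{\mathcal E}v_1$ imply $t_0\{v_0/x\}\mathcal X_{\mathcal E}t_1\{v_1/x\}$. $\approx^p$ is the largest such relation; $t_0\approx^p_{\emptyset}t_1$ means $(\emptyset,t_0,t_1)\in\approx^p$ (defined on closed terms only). *)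

(* Defs.v *)
(* lambda_S (call-by-value lambda calculus with shift/reset),
   represented with de Bruijn indices (terms up to alpha-conversion). *)
From Stdlib Require Import Arith.

(* t ::= x | \x.t | t t | S k.t | <t>   ; Lam and Shift bind index 0. *)
Inductive term : Type :=
| Var : nat -> term
| Lam : term -> term
| App : term -> term -> term
| Shift : term -> term
| Reset : term -> term.

Fixpoint lift (d c : nat) (t : term) : term :=
  match t with
  | Var n => if n <? c then Var n else Var (n + d)
  | Lam b => Lam (lift d (S c) b)
  | App a b => App (lift d c a) (lift d c b)
  | Shift b => Shift (lift d (S c) b)
  | Reset a => Reset (lift d c a)
  end.

Fixpoint subst (n : nat) (v : term) (t : term) : term :=
  match t with
  | Var m => if m <? n then Var m
             else if m =? n then lift n 0 v else Var (m - 1)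
  | Lam b => Lam (subst (S n) v b)
  | App a b => App (subst n v a) (subst n v b)
  | Shift b => Shift (subst (S n) v b)
  | Reset a => Reset (subst n v a)
  end.

(* swap the indices c and c+1 (used to exchange the order of two binders) *)
Fixpoint swap (c : nat) (t : term) : term :=
  match t with
  | Var m => if m =? c then Var (S c) else if m =? S c then Var c else Var m
  | Lam b => Lam (swap (S c) b)
  | App a b => App (swap c a) (swap c b)
  | Shift b => Shift (swap (S c) b)
  | Reset a => Reset (swap c a)
  end.

Fixpoint closed_at (n : nat) (t : term) : Prop :=
  match t with
  | Var m => m < n
  | Lam b => closed_at (S n) b
  | App a b => closed_at n a /\ closed_at n b
  | Shift b => closed_at (S n) b
  | Reset a => closed_at n a
  end.

Definition closed (t : term) : Prop := closed_at 0 t.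

Definition is_value (t : term) : Prop :=
  match t with Lam _ => True | _ => False end.

Definition is_program (t : term) : Prop :=
  match t with Reset _ => True | _ => False end.

Inductive ctx : Type :=
| Hole : ctx
| CAppR : term -> ctx -> ctx
| CAppL : ctx -> term -> ctx
| CRes : ctx -> ctx.

Fixpoint plug (F : ctx) (t : term) : term :=
  match F with
  | Hole => t
  | CAppR v F' => App v (plug F' t)
  | CAppL F' u => App (plug F' t) u
  | CRes F' => Reset (plug F' t)
  end.

Fixpoint lift_ctx (d c : nat) (F : ctx) : ctx :=
  match F with
  | Hole => Hole
  | CAppR v F' => CAppR (lift d c v) (lift_ctx d c F')
  | CAppL F' u => CAppL (lift_ctx d c F') (lift d c u)
  | CRes F' => CRes (lift_ctx d c F')
  end.

Fixpoint is_ectx (F : ctx) : Prop :=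
  match F with
  | Hole => True
  | CAppR v F' => is_value v /\ is_ectx F'
  | CAppL F' _ => is_ectx F'
  | CRes F' => is_ectx F'
  end.

Fixpoint is_pure (E : ctx) : Prop :=
  match E with
  | Hole => True
  | CAppR v E' => is_value v /\ is_pure E'
  | CAppL E' _ => is_pure E'
  | CRes _ => False
  end.

Fixpoint closed_ctx (F : ctx) : Prop :=
  match F with
  | Hole => True
  | CAppR v F' => closed v /\ closed_ctx F'
  | CAppL F' u => closed_ctx F' /\ closed u
  | CRes F' => closed_ctx F'
  end.

Inductive step : term -> term -> Prop :=
| step_beta : forall F b v, is_ectx F -> is_value v ->
    step (plug F (App (Lam b) v)) (plug F (subst 0 v b))
| step_shift : forall F E b, is_ectx F -> is_pure E ->
    step (plug F (Reset (plug E (Shift b))))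
         (plug F (Reset (subst 0 (Lam (Reset (plug (lift_ctx 1 0 E) (Var 0)))) b)))
| step_reset : forall F v, is_ectx F -> is_value v ->
    step (plug F (Reset v)) (plug F v).

Inductive steps : term -> term -> Prop :=
| steps_refl : forall t, steps t t
| steps_step : forall t u w, step t u -> steps u w -> steps t w.

Definition rel := term -> term -> Prop.

Inductive tilde_open (R : rel) : rel :=
| TO_R : forall a b, R a b -> tilde_open R a b
| TO_var : forall n, tilde_open R (Var n) (Var n)
| TO_lam : forall a b, tilde_open R a b -> tilde_open R (Lam a) (Lam b)
| TO_app : forall a a' b b', tilde_open R a b -> tilde_open R a' b' ->
    tilde_open R (App a a') (App b b')
| TO_shift : forall a b, tilde_open R a b -> tilde_open R (Shift a) (Shift b)
| TO_reset : forall a b, tilde_open R a b -> tilde_open R (Reset a) (Reset b).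

Definition tilde (R : rel) : rel :=
  fun a b => tilde_open R a b /\ closed a /\ closed b.

Inductive hat (R : rel) : ctx -> ctx -> Prop :=
| H_hole : hat R Hole Hole
| H_appR : forall v0 v1 F0 F1, hat R F0 F1 -> is_value v0 -> is_value v1 ->
    tilde R v0 v1 -> hat R (CAppR v0 F0) (CAppR v1 F1)
| H_appL : forall F0 F1 t0 t1, hat R F0 F1 -> tilde R t0 t1 ->
    hat R (CAppL F0 t0) (CAppL F1 t1)
| H_res : forall F0 F1, hat R F0 F1 -> hat R (CRes F0) (CRes F1).

Definition is_env (E : rel) : Prop :=
  forall a b, E a b -> is_value a /\ closed a /\ is_value b /\ closed b.

Definition empty_env : rel := fun _ _ => False.

Definition add_env (v0 v1 : term) (E : rel) : rel :=
  fun a b => (a = v0 /\ b = v1) \/ E a b.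

Record envrel : Type := {
  X_env : rel -> Prop;
  X_tri : rel -> term -> term -> Prop
}.

Definition env_bisim_p (X : envrel) : Prop :=
  (forall E, X_env X E -> is_env E) /\
  (forall E t0 t1, X_tri X E t0 t1 -> is_env E /\ closed t0 /\ closed t1) /\
  (forall E t0 t1, X_tri X E t0 t1 -> ~ (is_program t0 /\ is_program t1) ->
     forall E0 E1, is_pure E0 -> is_pure E1 -> hat E E0 E1 ->
       X_tri X E (Reset (plug E0 t0)) (Reset (plug E1 t1))) /\
  (forall E p0 p1, X_tri X E p0 p1 -> is_program p0 -> is_program p1 ->
     (forall p0', step p0 p0' -> is_program p0' ->
        exists p1', steps p1 p1' /\ is_program p1' /\ X_tri X E p0' p1') /\
     (forall v0, step p0 v0 -> is_value v0 ->
        exists v1, steps p1 v1 /\ is_value v1 /\ X_env X (add_env v0 v1 E)) /\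
     (forall p1', step p1 p1' -> is_program p1' ->
        exists p0', steps p0 p0' /\ is_program p0' /\ X_tri X E p0' p1') /\
     (forall v1, step p1 v1 -> is_value v1 ->
        exists v0, steps p0 v0 /\ is_value v0 /\ X_env X (add_env v0 v1 E))) /\
  (forall E b0 b1 v0 v1, X_env X E -> E (Lam b0) (Lam b1) ->
     is_value v0 -> is_value v1 -> tilde E v0 v1 ->
     X_tri X E (subst 0 v0 b0) (subst 0 v1 b1)).

(* t0 ~p_E t1 : the triple belongs to the largest bisimulation (= union of all) *)
Definition approx_p (E : rel) (t0 t1 : term) : Prop :=
  exists X, env_bisim_p X /\ X_tri X E t0 t1.

(* Main.v *)
Require Import Defs.
From Stdlib Require Import Arith Lia.

Definition mkc (E : ctx) : term := Lam (Reset (plug (lift_ctx 1 0 E) (Var 0))).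

Lemma closed_mono t : forall n m, closed_at n t -> n <= m -> closed_at m t.
Proof.
  induction t; simpl; intros.
  - lia.
  - eapply IHt; eauto; lia.
  - destruct H; split; eauto.
  - eapply IHt; eauto; lia.
  - eauto.
Qed.

Lemma lift_closed t : forall d c, closed_at c t -> lift d c t = t.
Proof.
  induction t; simpl; intros.
  - destruct (Nat.ltb_spec n c); [reflexivity|lia].
  - f_equal; eauto.
  - destruct H; f_equal; eauto.
  - f_equal; eauto.
  - f_equal; eauto.
Qed.

Lemma wlift d c w : closed w -> lift d c w = w.
Proof. intro H; apply lift_closed; eapply closed_mono; eauto; lia. Qed.

Lemma subst_closed t : forall n v, closed_at n t -> subst n v t = t.
Proof.
  induction t; simpl; intros.
  - destruct (Nat.ltb_spec n n0); [reflexivity|lia].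
  - f_equal; eauto.
  - destruct H; f_equal; eauto.
  - f_equal; eauto.
  - f_equal; eauto.
Qed.

Lemma wsubst n v w : closed w -> subst n v w = w.
Proof. intro H; apply subst_closed; eapply closed_mono; eauto; lia. Qed.

Lemma swap_closed t : forall c, closed_at c t -> swap c t = t.
Proof.
  induction t; simpl; intros.
  - destruct (Nat.eqb_spec n c); [lia|]. destruct (Nat.eqb_spec n (S c)); [lia|reflexivity].
  - f_equal; eauto.
  - destruct H; f_equal; eauto.
  - f_equal; eauto.
  - f_equal; eauto.
Qed.

Lemma wswap c w : closed w -> swap c w = w.
Proof. intro H; apply swap_closed; eapply closed_mono; eauto; lia. Qed.

Ltac crunch := repeat (simpl; match goal with
  | |- context [?a <? ?b] => destruct (Nat.ltb_spec a b)
  | |- context [?a =? ?b] => destruct (Nat.eqb_spec a b) end); simpl; try lia.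

Ltac fin := repeat match goal with
  | H : closed ?w |- context [lift ?d ?c ?w] => rewrite (wlift d c w H)
  | H : closed ?w |- context [subst ?d ?c ?w] => rewrite (wsubst d c w H)
  | H : closed ?w |- context [swap ?c ?w] => rewrite (wswap c w H)
  end; try reflexivity; try (f_equal; lia); try lia.

Lemma closed_lift t : forall n d c, closed_at n t -> closed_at (n + d) (lift d c t).
Proof.
  induction t; simpl; intros.
  - crunch.
  - apply (IHt (S n)); auto.
  - destruct H; split; eauto.
  - apply (IHt (S n)); auto.
  - eauto.
Qed.

Lemma closed_subst t : forall k v, closed_at (S k) t -> closed v -> closed_at k (subst k v t).
Proof.
  induction t; simpl; intros.
  - crunch; rewrite wlift by auto; eapply closed_mono; eauto; lia.
  - eauto.
  - destruct H; split; eauto.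
  - eauto.
  - eauto.
Qed.

Lemma subst_lift_comm C : forall i j k n w, closed w -> i <= j -> n = j + k ->
  subst n w (lift k i C) = lift k i (subst j w C).
Proof.
  induction C; simpl; intros.
  - crunch; fin.
  - f_equal; apply IHC; auto; lia.
  - f_equal; eauto.
  - f_equal; apply IHC; auto; lia.
  - f_equal; eauto.
Qed.

Lemma subst_subst_comm X : forall k n C w, closed w -> k <= n ->
  subst n w (subst k C X) = subst k (subst (n - k) w C) (subst (S n) w X).
Proof.
  induction X; simpl; intros.
  - crunch; fin. apply subst_lift_comm; auto; lia.
  - f_equal. replace (n - k) with (S n - S k) by lia. apply IHX; auto; lia.
  - f_equal; eauto.
  - f_equal. replace (n - k) with (S n - S k) by lia. apply IHX; auto; lia.
  - f_equal; eauto.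
Qed.

Lemma subst_swap_comm B : forall c n w, closed w -> S (S c) <= n ->
  subst n w (swap c B) = swap c (subst n w B).
Proof.
  induction B; simpl; intros.
  - crunch; fin.
  - f_equal; apply IHB; auto; lia.
  - f_equal; eauto.
  - f_equal; apply IHB; auto; lia.
  - f_equal; eauto.
Qed.

Lemma subst_swap_key B : forall n v w, closed v -> closed w ->
  subst n v (subst (S n) w (swap n B)) = subst n w (subst (S n) v B).
Proof.
  induction B; simpl; intros.
  - crunch; fin.
  - f_equal; eauto.
  - f_equal; eauto.
  - f_equal; eauto.
  - f_equal; eauto.
Qed.

Lemma subst_lift1 t : forall n v, subst n v (lift 1 n t) = t.
Proof.
  induction t; simpl; intros.
  - crunch; fin.
  - f_equal; eauto.
  - f_equal; eauto.
  - f_equal; eauto.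
  - f_equal; eauto.
Qed.
Fixpoint subst_ctx (n : nat) (w : term) (E : ctx) : ctx :=
  match E with
  | Hole => Hole
  | CAppR v E' => CAppR (subst n w v) (subst_ctx n w E')
  | CAppL E' u => CAppL (subst_ctx n w E') (subst n w u)
  | CRes E' => CRes (subst_ctx n w E')
  end.

Fixpoint comp (E F : ctx) : ctx :=
  match E with
  | Hole => F
  | CAppR v E' => CAppR v (comp E' F)
  | CAppL E' u => CAppL (comp E' F) u
  | CRes E' => CRes (comp E' F)
  end.

Lemma plug_comp E F t : plug (comp E F) t = plug E (plug F t).
Proof. induction E; simpl; congruence. Qed.

Lemma comp_hole E : comp E Hole = E.
Proof. induction E; simpl; congruence. Qed.

Lemma is_ectx_comp E F : is_ectx E -> is_ectx F -> is_ectx (comp E F).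
Proof. induction E; simpl; intuition. Qed.

Lemma plug_subst E : forall n w t, subst n w (plug E t) = plug (subst_ctx n w E) (subst n w t).
Proof. induction E; simpl; intros; congruence. Qed.

Lemma subst_ctx_lift E n w : closed w ->
  subst_ctx (S n) w (lift_ctx 1 0 E) = lift_ctx 1 0 (subst_ctx n w E).
Proof.
  intro Hw; induction E; simpl; f_equal; auto; apply subst_lift_comm; auto; lia.
Qed.

Lemma mkc_subst E n w : closed w -> subst n w (mkc E) = mkc (subst_ctx n w E).
Proof.
  intro Hw. unfold mkc. simpl. rewrite plug_subst, subst_ctx_lift by auto. reflexivity.
Qed.

Lemma is_pure_subst E n w : is_pure E -> is_pure (subst_ctx n w E).
Proof.
  induction E; simpl; intros H; try tauto.
  - destruct H; split; auto. destruct t; simpl in *; tauto.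
Qed.

Lemma closed_plug E : forall n t, closed_at n (plug E t) -> closed_at n t.
Proof. induction E; simpl; intuition eauto. Qed.

Lemma closed_plug_repl E : forall n t t', closed_at n (plug E t) -> closed_at n t' ->
  closed_at n (plug E t').
Proof. induction E; simpl; intuition eauto. Qed.

Lemma lift_ctx_closed E : forall n d t, closed_at n (plug E t) -> lift_ctx d n E = E.
Proof.
  induction E; simpl; intros; auto.
  - destruct H; f_equal; eauto using lift_closed.
  - destruct H; f_equal; eauto using lift_closed.
  - f_equal; eauto.
Qed.

Lemma mkc_closed E : forall n t, closed_at n (plug E t) -> closed_at n (mkc E).
Proof.
  unfold mkc; simpl. induction E; simpl; intros.
  - lia.
  - destruct H; split; eauto. replace (S n) with (n + 1) by lia. apply closed_lift; auto.
  - destruct H; split; eauto. replace (S n) with (n + 1) by lia. apply closed_lift; auto.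
  - eauto.
Qed.

Inductive st : term -> term -> Prop :=
| st_beta b v : is_value v -> st (App (Lam b) v) (subst 0 v b)
| st_appL a a' u : st a a' -> st (App a u) (App a' u)
| st_appR v a a' : is_value v -> st a a' -> st (App v a) (App v a')
| st_reset a a' : st a a' -> st (Reset a) (Reset a')
| st_resetv v : is_value v -> st (Reset v) v
| st_shift E b : is_pure E -> st (Reset (plug E (Shift b))) (Reset (subst 0 (mkc E) b)).

Inductive sts : term -> term -> Prop :=
| sts_refl t : sts t t
| sts_step t u w : st t u -> sts u w -> sts t w.

Lemma sts_one a b : st a b -> sts a b.
Proof. intro; econstructor; eauto; constructor. Qed.

Lemma sts_trans a b c : sts a b -> sts b c -> sts a c.
Proof. induction 1; intros; auto. econstructor; eauto. Qed.

Lemma pure_ectx E : is_pure E -> is_ectx E.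
Proof. induction E; simpl; intuition. Qed.

Lemma st_plug E : forall a b, is_ectx E -> st a b -> st (plug E a) (plug E b).
Proof.
  induction E; simpl; intros; auto.
  - destruct H; constructor; auto.
  - constructor; auto.
  - constructor; auto.
Qed.

Lemma sts_plug E a b : is_ectx E -> sts a b -> sts (plug E a) (plug E b).
Proof. intros HE; induction 1; [constructor|]. econstructor; eauto using st_plug. Qed.

Lemma step_plug K a b : is_ectx K -> step a b -> step (plug K a) (plug K b).
Proof.
  intros HK Hs; inversion Hs; subst; rewrite <- !plug_comp.
  - apply step_beta; auto using is_ectx_comp.
  - apply step_shift; auto using is_ectx_comp.
  - apply step_reset; auto using is_ectx_comp.
Qed.

Lemma st_step a b : st a b -> step a b.
Proof.
  induction 1.
  - apply (step_beta Hole); simpl; auto.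
  - apply (step_plug (CAppL Hole u)); simpl; auto.
  - apply (step_plug (CAppR v Hole)); simpl; auto.
  - apply (step_plug (CRes Hole)); simpl; auto.
  - apply (step_reset Hole); simpl; auto.
  - apply (step_shift Hole); simpl; auto.
Qed.

Lemma step_st a b : step a b -> st a b.
Proof.
  intro Hs; inversion Hs; subst; apply st_plug; auto.
  - apply st_beta; auto.
  - apply (st_shift E); auto.
  - apply st_resetv; auto.
Qed.

Lemma sts_steps a b : sts a b -> steps a b.
Proof. induction 1; econstructor; eauto using st_step. Qed.

Lemma st_app_inv a u x : st (App a u) x ->
  (exists b, a = Lam b /\ is_value u /\ x = subst 0 u b) \/
  (exists a', st a a' /\ x = App a' u) \/
  (is_value a /\ exists u', st u u' /\ x = App a u').
Proof. intro H; inversion H; subst; eauto 10. Qed.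

Lemma st_reset_inv a x : st (Reset a) x ->
  (exists a', st a a' /\ x = Reset a') \/ (is_value a /\ x = a) \/
  (exists E b, is_pure E /\ a = plug E (Shift b) /\ x = Reset (subst 0 (mkc E) b)).
Proof. intro H; inversion H; subst; eauto 10. Qed.

Lemma val_nostep v x : is_value v -> st v x -> False.
Proof. destruct v; simpl; try tauto; intros _ H; inversion H. Qed.

Lemma plug_value E X : is_value (plug E X) -> is_value X.
Proof. destruct E; simpl; tauto. Qed.

Lemma plug_shift_not_value E b : is_value (plug E (Shift b)) -> False.
Proof. intro H; apply plug_value in H; simpl in H; auto. Qed.

Lemma plug_shift_stuck E b : forall x, is_pure E -> st (plug E (Shift b)) x -> False.
Proof.
  induction E; simpl; intros x Hp Hs.
  - inversion Hs.
  - destruct Hp as [Hv Hp].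
    apply st_app_inv in Hs as [[b' [? [Hv' ?]]]|[[a' [Ha ?]]|[_ [u' [Hu ?]]]]].
    + eapply plug_shift_not_value; eauto.
    + eapply val_nostep; eauto.
    + eauto.
  - apply st_app_inv in Hs as [[b' [Heq [Hv' ?]]]|[[a' [Ha ?]]|[Hv [u' [Hu ?]]]]].
    + apply (plug_shift_not_value E b); rewrite Heq; simpl; auto.
    + eauto.
    + eapply plug_shift_not_value; eauto.
  - destruct Hp.
Qed.

Lemma plug_step_inv E : forall X Y, is_pure E -> ~ is_value X -> st (plug E X) Y ->
  exists X', st X X' /\ Y = plug E X'.
Proof.
  induction E; simpl; intros X Y Hp Hn Hs.
  - eauto.
  - destruct Hp as [Hv Hp].
    apply st_app_inv in Hs as [[b' [? [Hv' ?]]]|[[a' [Ha ?]]|[_ [u' [Hu ->]]]]].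
    + exfalso; apply Hn; eapply plug_value; eauto.
    + exfalso; eapply val_nostep; eauto.
    + destruct (IHE X u' Hp Hn Hu) as [X' [H1 ->]]; eauto.
  - apply st_app_inv in Hs as [[b' [Heq [Hv' ?]]]|[[a' [Ha ->]]|[Hv [u' [Hu ?]]]]].
    + exfalso; apply Hn; apply (plug_value E); rewrite Heq; simpl; auto.
    + destruct (IHE X a' Hp Hn Ha) as [X' [H1 ->]]; eauto.
    + exfalso; apply Hn; eapply plug_value; eauto.
  - destruct Hp.
Qed.

Lemma plug_shift_decomp E : forall E2 X b, is_pure E -> is_pure E2 ->
  plug E X = plug E2 (Shift b) ->
  is_value X \/ exists E3, is_pure E3 /\ X = plug E3 (Shift b) /\ E2 = comp E E3.
Proof.
  induction E; simpl; intros E2 X b Hp Hp2 Heq.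
  - right; exists E2; auto.
  - destruct Hp as [Hv Hp]. destruct E2; simpl in Heq; try discriminate.
    + injection Heq as <- Heq. simpl in Hp2. destruct Hp2 as [_ Hp2].
      destruct (IHE E2 X b Hp Hp2 Heq) as [|[E3 [H1 [H2 ->]]]]; auto.
      right; exists E3; auto.
    + injection Heq as Heq _. subst. exfalso; eapply plug_shift_not_value; eauto.
  - destruct E2; simpl in Heq; try discriminate.
    + injection Heq as Heq _. left. simpl in Hp2. destruct Hp2 as [Hv _].
      apply (plug_value E); rewrite Heq; auto.
    + injection Heq as Heq <-. simpl in Hp2.
      destruct (IHE E2 X b Hp Hp2 Heq) as [|[E3 [H1 [H2 ->]]]]; auto.
      right; exists E3; auto.
  - destruct Hp.
Qed.

Lemma app_lam_shift L u E3 b : is_pure E3 -> App L u = plug E3 (Shift b) -> is_value L ->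
  exists G, is_pure G /\ E3 = CAppR L G /\ u = plug G (Shift b).
Proof.
  destruct E3; simpl; intros Hp Heq Hv; try discriminate.
  - injection Heq as H1 H2; subst; destruct Hp; eauto.
  - injection Heq as H1 H2; subst. exfalso; eapply plug_shift_not_value; eauto.
Qed.

Lemma st_closed a b : st a b -> closed_at 0 a -> closed_at 0 b.
Proof.
  induction 1; simpl; intros.
  - destruct H0; apply closed_subst; auto.
  - destruct H0; auto.
  - destruct H1; auto.
  - auto.
  - auto.
  - apply closed_subst. apply (closed_plug E) in H0 as H1; simpl in H1; auto.
    apply (mkc_closed E 0 (Shift b)); auto.
Qed.

Lemma sts_closed a b : sts a b -> closed_at 0 a -> closed_at 0 b.
Proof. induction 1; eauto using st_closed. Qed.

Lemma shift_det E b y : is_pure E -> st (Reset (plug E (Shift b))) y ->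
  y = Reset (subst 0 (mkc E) b).
Proof.
  intros Hp Hs. apply st_reset_inv in Hs as [[a' [Ha _]]|[[Hv _]|[E2 [b2 [Hp2 [Heq ->]]]]]].
  - exfalso; eapply plug_shift_stuck; eauto.
  - exfalso; eapply plug_shift_not_value; eauto.
  - destruct (plug_shift_decomp E E2 (Shift b) b2 Hp Hp2 Heq) as [H|[E3 [H1 [H2 ->]]]].
    + destruct H.
    + destruct E3; simpl in H2; try discriminate.
      injection H2 as ->. rewrite comp_hole. reflexivity.
Qed.

Lemma is_pure_comp E F : is_pure E -> is_pure F -> is_pure (comp E F).
Proof. induction E; simpl; intuition. Qed.

Inductive Sr : term -> term -> Prop :=
| Sr_var n : Sr (Var n) (Var n)
| Sr_lam a b : Sr a b -> Sr (Lam a) (Lam b)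
| Sr_app a a' b b' : Sr a b -> Sr a' b' -> Sr (App a a') (App b b')
| Sr_shift a b : Sr a b -> Sr (Shift a) (Shift b)
| Sr_reset a b : Sr a b -> Sr (Reset a) (Reset b)
| Sr_base1 E C A B u u' : is_pure E -> closed C -> Sr (mkc E) C -> Sr A B -> Sr u u' ->
    Sr (Reset (plug E (App (Lam (Shift A)) u)))
       (Reset (App (Lam (subst 1 C (swap 0 B))) u'))
| Sr_base2 E C A B v v' : is_pure E -> closed C -> Sr (mkc E) C -> Sr A B -> Sr v v' ->
    is_value v -> closed v ->
    Sr (Reset (plug E (Shift (subst 1 v A))))
       (Reset (App (Lam (subst 1 C (swap 0 B))) v')).

Lemma Sr_refl t : Sr t t.
Proof. induction t; constructor; auto. Qed.

Lemma Sr_value a b : Sr a b -> is_value a -> is_value b.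
Proof. destruct 1; simpl; auto. Qed.

Lemma Sr_value_r a b : Sr a b -> is_value b -> is_value a.
Proof. destruct 1; simpl; auto. Qed.

Lemma Sr_prog a b : Sr a b -> is_program a -> is_program b.
Proof. destruct 1; simpl; auto. Qed.

Lemma Sr_lam_inv x b : Sr (Lam x) b -> exists y, b = Lam y /\ Sr x y.
Proof. intro H; inversion H; subst; eauto. Qed.

Lemma Sr_lam_inv_r a y : Sr a (Lam y) -> exists x, a = Lam x /\ Sr x y.
Proof. intro H; inversion H; subst; eauto. Qed.

Inductive ctxrel : ctx -> ctx -> Prop :=
| cr_hole : ctxrel Hole Hole
| cr_appR v v' E E' : Sr v v' -> ctxrel E E' -> ctxrel (CAppR v E) (CAppR v' E')
| cr_appL E E' t t' : ctxrel E E' -> Sr t t' -> ctxrel (CAppL E t) (CAppL E' t').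

Lemma ctxrel_plug E E' t t' : ctxrel E E' -> Sr t t' -> Sr (plug E t) (plug E' t').
Proof. induction 1; simpl; intros; try constructor; auto. Qed.

Lemma Sr_plug_shift E : forall x b, is_pure E -> Sr (plug E (Shift x)) b ->
  exists E' y, b = plug E' (Shift y) /\ ctxrel E E' /\ Sr x y /\ is_pure E'.
Proof.
  induction E; simpl; intros x b Hp H.
  - inversion H; subst. exists Hole, b0; simpl; repeat split; auto; constructor.
  - destruct Hp as [Hv Hp]. inversion H; subst.
    destruct (IHE x b' Hp ltac:(assumption)) as [E' [y [-> [K1 [K2 K3]]]]].
    exists (CAppR b0 E'), y; simpl; repeat split; auto; try constructor; auto.
    eapply Sr_value; eauto.
  - inversion H; subst.
    destruct (IHE x b0 Hp ltac:(assumption)) as [E' [y [-> [K1 [K5 K6]]]]].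
    exists (CAppL E' b'), y; simpl; repeat split; auto; constructor; auto.
  - destruct Hp.
Qed.

Lemma Sr_plug_shift_r E' : forall y a, is_pure E' -> Sr a (plug E' (Shift y)) ->
  exists E x, a = plug E (Shift x) /\ ctxrel E E' /\ Sr x y /\ is_pure E.
Proof.
  induction E'; simpl; intros y a Hp H.
  - inversion H; subst. exists Hole, a0; simpl; repeat split; auto; constructor.
  - destruct Hp as [Hv Hp]. inversion H; subst.
    destruct (IHE' y a' Hp ltac:(assumption)) as [E [x [-> [K1 [K2 K3]]]]].
    exists (CAppR a0 E), x; simpl; repeat split; auto; try constructor; auto.
    eapply Sr_value_r; eauto.
  - inversion H; subst.
    destruct (IHE' y a0 Hp ltac:(assumption)) as [E [x [-> [K1 [K5 K6]]]]].
    exists (CAppL E a'), x; simpl; repeat split; auto; constructor; auto.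
  - destruct Hp.
Qed.

Lemma Sr_subst a b : Sr a b -> forall n w w', closed w -> closed w' -> Sr w w' ->
  Sr (subst n w a) (subst n w' b).
Proof.
  induction 1; intros n0 w w' Cw Cw' Hw; simpl.
  - destruct (n <? n0); [constructor|]. destruct (n =? n0); [|constructor].
    rewrite !wlift by auto; auto.
  - constructor; auto.
  - constructor; auto.
  - constructor; auto.
  - constructor; auto.
  - rewrite plug_subst; simpl.
    rewrite (subst_subst_comm (swap 0 B) 1 (S n0)) by (auto; lia).
    replace (S n0 - 1) with n0 by lia.
    rewrite (wsubst n0 w' C) by auto.
    rewrite subst_swap_comm by (auto; lia).
    apply Sr_base1; auto using is_pure_subst.
    pose proof (IHSr1 n0 w w' Cw Cw' Hw) as h.
    rewrite mkc_subst, wsubst in h by auto. exact h.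
  - rewrite plug_subst; simpl.
    rewrite (subst_subst_comm (swap 0 B) 1 (S n0)) by (auto; lia).
    rewrite (subst_subst_comm A 1 (S n0)) by (auto; lia).
    replace (S n0 - 1) with n0 by lia.
    rewrite (wsubst n0 w' C) by auto.
    rewrite (wsubst n0 w v) by auto.
    rewrite subst_swap_comm by (auto; lia).
    apply Sr_base2; auto using is_pure_subst.
    + pose proof (IHSr1 n0 w w' Cw Cw' Hw) as h.
      rewrite mkc_subst, wsubst in h by auto. exact h.
    + pose proof (IHSr3 n0 w w' Cw Cw' Hw) as h.
      rewrite wsubst in h by auto. exact h.
Qed.

Lemma Sr_mkc E E' t t' : closed_at 0 (plug E t) -> closed_at 0 (plug E' t') -> ctxrel E E' ->
  Sr (mkc E) (mkc E').
Proof.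
  intros H1 H2 H3; unfold mkc.
  rewrite (lift_ctx_closed E 0 1 t H1), (lift_ctx_closed E' 0 1 t' H2).
  constructor; constructor; apply ctxrel_plug; auto; constructor.
Qed.

Lemma key E C A B v v' : closed v -> closed v' -> closed C -> closed (mkc E) ->
  Sr A B -> Sr v v' -> Sr (mkc E) C ->
  Sr (subst 0 (mkc E) (subst 1 v A)) (subst 0 v' (subst 1 C (swap 0 B))).
Proof.
  intros. rewrite subst_swap_key by auto.
  apply Sr_subst; auto. apply Sr_subst; auto.
Qed.

Lemma sts_appL a b u : sts a b -> sts (App a u) (App b u).
Proof. intro H; apply (sts_plug (CAppL Hole u)); simpl; auto. Qed.

Lemma sts_appR v a b : is_value v -> sts a b -> sts (App v a) (App v b).
Proof. intros Hv H; apply (sts_plug (CAppR v Hole)); simpl; auto. Qed.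

Lemma sts_reset a b : sts a b -> sts (Reset a) (Reset b).
Proof. intro H; apply (sts_plug (CRes Hole)); simpl; auto. Qed.

Lemma base_shift E C A B G G' b0 y :
  is_pure E -> closed C -> Sr (mkc E) C -> Sr A B -> ctxrel G G' -> Sr b0 y ->
  closed_at 0 (plug E (App (Lam (Shift A)) (plug G (Shift b0)))) ->
  closed_at 0 (App (Lam (subst 1 C (swap 0 B))) (plug G' (Shift y))) ->
  Sr (Reset (subst 0 (mkc (comp E (CAppR (Lam (Shift A)) G))) b0))
     (Reset (subst 0 (mkc (CAppR (Lam (subst 1 C (swap 0 B))) G')) y)).
Proof.
  intros HE HC H1 H2 H3 H4 Ca Cb.
  assert (Ca' : closed_at 0 (plug (comp E (CAppR (Lam (Shift A)) G)) (Shift b0)))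
    by (rewrite plug_comp; exact Ca).
  assert (Cb' : closed_at 0 (plug (CAppR (Lam (subst 1 C (swap 0 B))) G') (Shift y))) by exact Cb.
  constructor. apply Sr_subst; [exact H4| | |].
  - eapply mkc_closed; eauto.
  - eapply mkc_closed; eauto.
  - unfold mkc. rewrite (lift_ctx_closed _ 0 1 _ Ca'), (lift_ctx_closed _ 0 1 _ Cb').
    rewrite plug_comp; simpl. constructor. apply Sr_base1; auto.
    apply ctxrel_plug; auto; constructor.
Qed.

Lemma sim : forall a b, Sr a b -> closed a -> closed b ->
  (forall a', st a a' -> exists b', sts b b' /\ Sr a' b') /\
  (forall b', st b b' -> exists a', sts a a' /\ Sr a' b').
Proof.
  induction 1; intros Ca Cb; unfold closed in *; simpl in Ca, Cb; split; intros x Hx.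
  - inversion Hx.
  - inversion Hx.
  - inversion Hx.
  - inversion Hx.
  -
    destruct Ca as [Ca1 Ca2]; destruct Cb as [Cb1 Cb2].
    apply st_app_inv in Hx as [[b0 [-> [Hv ->]]]|[[a1 [Hs ->]]|[Hv [u1 [Hs ->]]]]].
    + destruct (Sr_lam_inv _ _ H) as [y [-> Hy]].
      exists (subst 0 b' y); split.
      * apply sts_one, st_beta. eapply Sr_value; eauto.
      * apply Sr_subst; auto.
    + destruct (proj1 (IHSr1 Ca1 Cb1) a1 Hs) as [b1 [Hb1 Hr]].
      exists (App b1 b'); split; [apply sts_appL; auto|constructor; auto].
    + destruct (proj1 (IHSr2 Ca2 Cb2) u1 Hs) as [b1 [Hb1 Hr]].
      exists (App b b1); split; [apply sts_appR; auto; eapply Sr_value; eauto|constructor; auto].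
  - destruct Ca as [Ca1 Ca2]; destruct Cb as [Cb1 Cb2].
    apply st_app_inv in Hx as [[b0 [-> [Hv ->]]]|[[a1 [Hs ->]]|[Hv [u1 [Hs ->]]]]].
    + destruct (Sr_lam_inv_r _ _ H) as [y [-> Hy]].
      exists (subst 0 a' y); split.
      * apply sts_one, st_beta. eapply Sr_value_r; eauto.
      * apply Sr_subst; auto.
    + destruct (proj2 (IHSr1 Ca1 Cb1) a1 Hs) as [b1 [Hb1 Hr]].
      exists (App b1 a'); split; [apply sts_appL; auto|constructor; auto].
    + destruct (proj2 (IHSr2 Ca2 Cb2) u1 Hs) as [b1 [Hb1 Hr]].
      exists (App a b1); split; [apply sts_appR; auto; eapply Sr_value_r; eauto|constructor; auto].
  - inversion Hx.
  - inversion Hx.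
  -
    apply st_reset_inv in Hx as [[a1 [Hs ->]]|[[Hv ->]|[E [b0 [Hp [-> ->]]]]]].
    + destruct (proj1 (IHSr Ca Cb) a1 Hs) as [b1 [Hb1 Hr]].
      exists (Reset b1); split; [apply sts_reset; auto|constructor; auto].
    + exists b; split; auto. apply sts_one, st_resetv. eapply Sr_value; eauto.
    + destruct (Sr_plug_shift E b0 b Hp H) as [E' [y [-> [K1 [K2 K3]]]]].
      exists (Reset (subst 0 (mkc E') y)); split.
      * apply sts_one, st_shift; auto.
      * constructor. apply Sr_subst;
          [auto | eapply mkc_closed; eauto | eapply mkc_closed; eauto | eapply Sr_mkc; eauto].
  - apply st_reset_inv in Hx as [[a1 [Hs ->]]|[[Hv ->]|[E' [b0 [Hp [-> ->]]]]]].
    + destruct (proj2 (IHSr Ca Cb) a1 Hs) as [b1 [Hb1 Hr]].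
      exists (Reset b1); split; [apply sts_reset; auto|constructor; auto].
    + exists a; split; auto. apply sts_one, st_resetv. eapply Sr_value_r; eauto.
    + destruct (Sr_plug_shift_r E' b0 a Hp H) as [E [y [-> [K1 [K2 K3]]]]].
      exists (Reset (subst 0 (mkc E) y)); split.
      * apply sts_one, st_shift; auto.
      * constructor. apply Sr_subst;
          [auto | eapply mkc_closed; eauto | eapply mkc_closed; eauto | eapply Sr_mkc; eauto].
  -
    assert (CX := closed_plug _ _ _ Ca). simpl in CX. destruct CX as [CA Cu].
    destruct Cb as [CB Cu'].
    apply st_reset_inv in Hx as [[a1 [Hs ->]]|[[Hv ->]|[E2 [b0 [Hp [Heq ->]]]]]].
    + destruct (plug_step_inv E (App (Lam (Shift A)) u) _ H ltac:(simpl; tauto) Hs) as [X' [Hs' ->]].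
      clear Hs. apply st_app_inv in Hs' as [[b0 [Hb [Hv ->]]]|[[a1 [Hs ->]]|[Hv [u1 [Hs ->]]]]].
      * injection Hb as <-. exists (Reset (App (Lam (subst 1 C (swap 0 B))) u')).
        split; [constructor|]. simpl. apply Sr_base2; auto.
      * exfalso; eapply val_nostep; [|eauto]; simpl; auto.
      * destruct (proj1 (IHSr3 Cu Cu') u1 Hs) as [b1 [Hb1 Hr]].
        exists (Reset (App (Lam (subst 1 C (swap 0 B))) b1)); split.
        -- apply sts_reset, sts_appR; simpl; auto.
        -- apply Sr_base1; auto.
    + exfalso; apply plug_value in Hv; simpl in Hv; auto.
    + destruct (plug_shift_decomp E E2 _ b0 H Hp Heq) as [Hv|[E3 [Hp3 [Heq3 ->]]]].
      { destruct Hv. }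
      destruct (app_lam_shift _ _ _ _ Hp3 Heq3 I) as [G [HG [-> ->]]].
      destruct (Sr_plug_shift G b0 u' HG H3) as [G' [y [-> [K1 [K2 K3]]]]].
      exists (Reset (subst 0 (mkc (CAppR (Lam (subst 1 C (swap 0 B))) G')) y)); split.
      * apply sts_one. apply (st_shift (CAppR (Lam (subst 1 C (swap 0 B))) G')). simpl; auto.
      * apply base_shift; auto. simpl; auto.
  -
    assert (CX := closed_plug _ _ _ Ca). simpl in CX. destruct CX as [CA Cu].
    destruct Cb as [CB Cu'].
    apply st_reset_inv in Hx as [[a1 [Hs ->]]|[[Hv ->]|[E2 [b0 [Hp [Heq ->]]]]]].
    + apply st_app_inv in Hs as [[b9 [Hb [Hv ->]]]|[[a2 [Hs2 ->]]|[Hv [u1 [Hs2 ->]]]]].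
      * injection Hb as <-.
        assert (Hvu : is_value u) by (eapply Sr_value_r; eauto).
        exists (Reset (subst 0 (mkc E) (subst 1 u A))); split.
        -- eapply sts_step.
           { apply st_reset. apply st_plug. apply pure_ectx; auto.
             pose proof (st_beta (Shift A) u Hvu) as h. simpl in h. exact h. }
           apply sts_one. apply st_shift; auto.
        -- constructor. apply key; auto. apply (mkc_closed E 0 _ Ca).
      * exfalso; eapply val_nostep; [|eauto]; simpl; auto.
      * destruct (proj2 (IHSr3 Cu Cu') u1 Hs2) as [b1 [Hb1 Hr]].
        exists (Reset (plug E (App (Lam (Shift A)) b1))); split.
        -- apply sts_reset, sts_plug; [apply pure_ectx; auto|]. apply sts_appR; simpl; auto.
        -- apply Sr_base1; auto.
    + destruct Hv.
    + destruct (app_lam_shift _ _ _ _ Hp Heq I) as [G' [HG' [-> ->]]].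
      destruct (Sr_plug_shift_r G' b0 u HG' H3) as [G [x [-> [K1 [K2 K3]]]]].
      exists (Reset (subst 0 (mkc (comp E (CAppR (Lam (Shift A)) G))) x)); split.
      * apply sts_one. pose proof (st_shift (comp E (CAppR (Lam (Shift A)) G)) x) as h.
        rewrite plug_comp in h. simpl in h. apply h.
        apply is_pure_comp; simpl; auto.
      * apply base_shift; auto. simpl; auto.
  -
    destruct Cb as [CB Cv'].
    apply st_reset_inv in Hx as [[a1 [Hs ->]]|[[Hv ->]|[E2 [b0 [Hp [Heq ->]]]]]].
    + exfalso; eapply plug_shift_stuck; eauto.
    + exfalso; eapply plug_shift_not_value; eauto.
    + destruct (plug_shift_decomp E E2 _ b0 H Hp Heq) as [Hv|[E3 [Hp3 [Heq3 ->]]]].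
      { destruct Hv. }
      destruct E3; simpl in Heq3; try (destruct (plug E3 (Shift b0)); discriminate).
      injection Heq3 as <-. rewrite comp_hole.
      exists (Reset (subst 0 v' (subst 1 C (swap 0 B)))); split.
      * apply sts_one, st_reset, st_beta. eapply Sr_value; eauto.
      * constructor. apply key; auto. apply (mkc_closed E 0 _ Ca).
  - destruct Cb as [CB Cv'].
    apply st_reset_inv in Hx as [[a1 [Hs ->]]|[[Hv ->]|[E2 [b0 [Hp [Heq ->]]]]]].
    + apply st_app_inv in Hs as [[b9 [Hb [Hv ->]]]|[[a2 [Hs2 ->]]|[Hv [u1 [Hs2 ->]]]]].
      * injection Hb as <-.
        exists (Reset (subst 0 (mkc E) (subst 1 v A))); split.
        -- apply sts_one, st_shift; auto.
        -- constructor. apply key; auto. apply (mkc_closed E 0 _ Ca).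
      * exfalso; eapply val_nostep; [|eauto]; simpl; auto.
      * exfalso; eapply val_nostep; [|eauto]. eapply Sr_value; eauto.
    + destruct Hv.
    + destruct (app_lam_shift _ _ _ _ Hp Heq I) as [G' [HG' [-> ->]]].
      exfalso; eapply (plug_shift_not_value G'). eapply Sr_value; eauto.
Qed.

Lemma tilde_Sr (E : rel) a b : (forall x y, E x y -> Sr x y) -> tilde_open E a b -> Sr a b.
Proof. intros HE; induction 1; try constructor; auto. Qed.

Lemma tilde_empty (E : rel) a b : (forall x y, ~ E x y) -> tilde_open E a b -> a = b.
Proof. intros HE; induction 1; subst; auto. exfalso; eapply HE; eauto. Qed.

Lemma hat_plug (E : rel) E0 E1 t t' : (forall x y, E x y -> Sr x y) -> hat E E0 E1 ->
  Sr t t' -> Sr (plug E0 t) (plug E1 t').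
Proof.
  intros HE; induction 1; simpl; intros; auto.
  - constructor; auto. destruct H2; eapply tilde_Sr; eauto.
  - constructor; auto. destruct H0; eapply tilde_Sr; eauto.
  - constructor; auto.
Qed.

Lemma hat_closed (E : rel) E0 E1 t t' : hat E E0 E1 -> closed t -> closed t' ->
  closed (plug E0 t) /\ closed (plug E1 t').
Proof.
  unfold closed; induction 1; simpl; intros; auto.
  - destruct H2 as [_ [? ?]]. destruct IHhat; auto.
  - destruct H0 as [_ [? ?]]. destruct IHhat; auto.
Qed.

Lemma hat_empty (E : rel) E0 E1 : (forall x y, ~ E x y) -> hat E E0 E1 -> E0 = E1.
Proof.
  intros HE; induction 1; f_equal; auto.
  - destruct H2; eapply tilde_empty; eauto.
  - destruct H0; eapply tilde_empty; eauto.
Qed.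

Definition Xe (E : rel) : Prop := is_env E /\ forall a b, E a b -> Sr a b.

Definition Lt (t0 t1 : term) := App (Lam (Shift t0)) t1.
Definition Rt (t0 t1 : term) := Shift (App (Lam (swap 0 t0)) (lift 1 0 t1)).

Definition Xt (t0 t1 : term) (E : rel) (a b : term) : Prop :=
  Xe E /\ closed a /\ closed b /\
  (Sr a b \/
   (exists E0, is_pure E0 /\ a = Reset (plug E0 (Lt t0 t1)) /\ b = Reset (plug E0 (Rt t0 t1))) \/
   ((forall x y, ~ E x y) /\ a = Lt t0 t1 /\ b = Rt t0 t1)).

Lemma add_env_ok (E : rel) v0 v1 : Xe E -> is_value v0 -> is_value v1 -> closed v0 -> closed v1 ->
  Sr v0 v1 -> Xe (add_env v0 v1 E).
Proof.
  intros [HE HS] ? ? ? ? ?; split.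
  - intros a b [[-> ->]|H']; auto.
  - intros a b [[-> ->]|H']; auto.
Qed.

Lemma sr_case t0 t1 (E : rel) p0 p1 : Xe E -> closed p0 -> closed p1 -> Sr p0 p1 ->
  (forall p0', step p0 p0' -> is_program p0' ->
     exists p1', steps p1 p1' /\ is_program p1' /\ Xt t0 t1 E p0' p1') /\
  (forall v0, step p0 v0 -> is_value v0 ->
     exists v1, steps p1 v1 /\ is_value v1 /\ Xe (add_env v0 v1 E)) /\
  (forall p1', step p1 p1' -> is_program p1' ->
     exists p0', steps p0 p0' /\ is_program p0' /\ Xt t0 t1 E p0' p1') /\
  (forall v1, step p1 v1 -> is_value v1 ->
     exists v0, steps p0 v0 /\ is_value v0 /\ Xe (add_env v0 v1 E)).
Proof.
  intros HE C0 C1 HS. destruct (sim _ _ HS C0 C1) as [S1 S2].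
  split; [|split; [|split]].
  - intros p0' Hs Hp. apply step_st in Hs. destruct (S1 _ Hs) as [b' [Hb Hr]].
    exists b'; split; [auto using sts_steps|split].
    + eapply Sr_prog; eauto.
    + split; [exact HE|split; [|split; [|left; exact Hr]]].
      * eapply st_closed; eauto.
      * eapply sts_closed; eauto.
  - intros v0 Hs Hv. apply step_st in Hs. destruct (S1 _ Hs) as [b' [Hb Hr]].
    exists b'; split; [auto using sts_steps|split].
    + eapply Sr_value; eauto.
    + apply add_env_ok; auto. eapply Sr_value; eauto.
      eapply st_closed; eauto. eapply sts_closed; eauto.
  - intros p1' Hs Hp. apply step_st in Hs. destruct (S2 _ Hs) as [b' [Hb Hr]].
    exists b'; split; [auto using sts_steps|split].
    + destruct Hr; simpl in *; auto.
    + split; [exact HE|split; [|split; [|left; exact Hr]]].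
      * eapply sts_closed; eauto.
      * eapply st_closed; eauto.
  - intros v1 Hs Hv. apply step_st in Hs. destruct (S2 _ Hs) as [b' [Hb Hr]].
    exists b'; split; [auto using sts_steps|split].
    + eapply Sr_value_r; eauto.
    + apply add_env_ok; auto. eapply Sr_value_r; eauto.
      eapply sts_closed; eauto. eapply st_closed; eauto.
Qed.

Theorem lemma20 (t0 t1 : term) :
  closed (App (Lam (Shift t0)) t1) ->
  closed (Shift (App (Lam (swap 0 t0)) (lift 1 0 t1))) ->
  approx_p empty_env (App (Lam (Shift t0)) t1)
                     (Shift (App (Lam (swap 0 t0)) (lift 1 0 t1))).
Proof.
  intros CL CR.
  exists {| X_env := Xe; X_tri := Xt t0 t1 |}.
  split.
  2:{ simpl. split; [split; [intros a b []|intros a b []]|]. split; [exact CL|]. split; [exact CR|].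
      right; right; split; [intros x y []|split; reflexivity]. }
  unfold env_bisim_p; simpl. split; [|split; [|split; [|split]]].
  - intros E [HE _]; auto.
  - intros E a b [[HE _] [Ca [Cb _]]]; auto.
  - intros E a b [HX [Ca [Cb Hc]]] Hnp E0 E1 Hp0 Hp1 Hh.
    destruct (hat_closed _ _ _ _ _ Hh Ca Cb) as [C0 C1].
    split; [exact HX|]. split; [exact C0|]. split; [exact C1|].
    destruct Hc as [Hs|[[E2 [_ [-> ->]]]|[He [-> ->]]]].
    + left. constructor. apply (hat_plug E E0 E1 a b); auto. apply HX.
    + exfalso; apply Hnp; simpl; auto.
    + right; left. apply (hat_empty _ _ _ He) in Hh. subst. eauto.
  - intros E p0 p1 [HX [C0 [C1 Hc]]] Hp0 Hp1.
    destruct Hc as [Hs|[[E0 [HE0 [-> ->]]]|[He [-> ->]]]].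
    + apply sr_case; auto.
    + set (q := Reset (App (Lam (subst 1 (mkc E0) (swap 0 t0))) t1)).
      assert (Hq : st (Reset (plug E0 (Rt t0 t1))) q).
      { unfold q. pose proof (st_shift E0 (App (Lam (swap 0 t0)) (lift 1 0 t1)) HE0) as h.
        simpl in h. rewrite subst_lift1 in h. exact h. }
      assert (Hdet : forall y, st (Reset (plug E0 (Rt t0 t1))) y -> y = q).
      { intros y Hy. apply shift_det in Hy; auto. rewrite Hy. unfold q. simpl.
        rewrite subst_lift1. reflexivity. }
      assert (Cm : closed (mkc E0)) by (apply (mkc_closed E0 0 (Lt t0 t1)); exact C0).
      assert (HSq : Sr (Reset (plug E0 (Lt t0 t1))) q).
      { unfold q, Lt. apply Sr_base1; auto using Sr_refl. }
      assert (Cq : closed q) by (eapply st_closed; eauto).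
      destruct (sr_case t0 t1 E _ _ HX C0 Cq HSq) as [A1 [A2 [A3 A4]]].
      repeat split.
      * intros p0' Hs Hp. destruct (A1 p0' Hs Hp) as [p1' [H1 H2]].
        exists p1'; split; auto. econstructor; [apply st_step; exact Hq|exact H1].
      * intros v0 Hs Hv. destruct (A2 v0 Hs Hv) as [v1 [H1 H2]].
        exists v1; split; auto. econstructor; [apply st_step; exact Hq|exact H1].
      * intros p1' Hs Hp. apply step_st in Hs. apply Hdet in Hs. subst p1'.
        exists (Reset (plug E0 (Lt t0 t1))); split; [constructor|split; [exact I|]].
        split; [exact HX|split; [exact C0|split; [exact Cq|left; exact HSq]]].
      * intros v1 Hs Hv. apply step_st in Hs. apply Hdet in Hs. subst v1.
        destruct Hv.
    + destruct Hp0.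
  - intros E b0 b1 v0 v1 [HE HS] HEb Hv0 Hv1 [Ht [Cv0 Cv1]].
    destruct (HE _ _ HEb) as [_ [Cb0 [_ Cb1]]].
    apply HS in HEb. inversion HEb; subst.
    split; [split; auto|]. split; [apply closed_subst; auto|]. split; [apply closed_subst; auto|].
    left. apply Sr_subst; auto. eapply tilde_Sr; eauto.
Qed.
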